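(* Let $\mathcal B=(B_1,\dots,B_d)$ be a splitting of order $d$ of $B_J\in\mathbb R^{n\times n}$. Then $1$ is an eigenvalue of $T(\mathcal B)$ if and only if $1$ is an eigenvalue of $B_J$. In particular, if $1$ is an eigenvalue of $B_J$ then the iteration $X^{(k+1)}=T(\mathcal B)X^{(k)}+\Gamma$ cannot be convergent for all initial data (since $\rho(T(\mathcal B))\ge1$).
   Context: For $B\in\mathbb R^{n\times n}$, a splitting of $B$ of order $d\ge1$ is an ordered $d$-tuple $\mathcal B=(B_1,\dots,B_d)$ of real $n\times n$ matrices with $B_p\neq O$ for all $p$, $\sum_{p=1}^d B_p=B$, and $B_p\circ B_q=O$ (Hadamard product) for $p\ne q$. The iteration matrix of $\mathcal B$ is the $dn\times dn$ matrix $T(\mathcal B)=(I_{dn}-\mathcal L)^{-1}\mathcal U$, where $\mathcal L,\mathcal U$ are $d\times d$ block matrices with $n\times n$ blocks, $\mathcal L_{ij}=B_j$ if $i>j$ and $O$ otherwise, $\mathcal U_{ij}=B_j$ if $i\le j$ and $O$ otherwise. *)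

(* Defs.v *)
From HB Require Import structures.
From mathcomp Require Import all_boot all_order all_algebra.
From mathcomp Require Import all_classical all_reals all_analysis.
Set Implicit Arguments. Unset Strict Implicit. Unset Printing Implicit Defensive.
Import Order.TTheory GRing.Theory Num.Theory.
Local Open Scope ring_scope.

(* Block indexing of 'I_(d * n): index i lies in block i %/ n, at inner position i %% n. *)
Lemma blk_proof d n (i : 'I_(d * n)) : (i %/ n < d)%N.
Proof.
case: n i => [|n] i; first by case: i => i; rewrite muln0.
by rewrite ltn_divLR // ltn_ord.
Qed.

Lemma inn_proof d n (i : 'I_(d * n)) : (i %% n < n)%N.
Proof.
case: n i => [|n] i; first by case: i => i; rewrite muln0.
by rewrite ltn_pmod.
Qed.

Definition blk d n (i : 'I_(d * n)) : 'I_d := Ordinal (blk_proof i).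
Definition inn d n (i : 'I_(d * n)) : 'I_n := Ordinal (inn_proof i).

Definition is_splitting (R : ringType) (n d : nat) (Bs : 'I_d -> 'M[R]_n)
    (B : 'M[R]_n) : Prop :=
  [/\ (0 < d)%N,
      forall p, Bs p != 0,
      \sum_(p < d) Bs p = B &
      forall p q, p != q -> forall i j, Bs p i j * Bs q i j = 0].

Definition splitL (R : ringType) (n d : nat) (Bs : 'I_d -> 'M[R]_n) : 'M[R]_(d * n) :=
  \matrix_(i, j) (if (blk j < blk i)%N then Bs (blk j) (inn i) (inn j) else 0).

Definition splitU (R : ringType) (n d : nat) (Bs : 'I_d -> 'M[R]_n) : 'M[R]_(d * n) :=
  \matrix_(i, j) (if (blk i <= blk j)%N then Bs (blk j) (inn i) (inn j) else 0).

Definition iterT (R : comUnitRingType) (n d : nat) (Bs : 'I_d -> 'M[R]_n) : 'M[R]_(d * n) :=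
  invmx (1%:M - splitL Bs) *m splitU Bs.

Definition iterates (R : ringType) (m : nat) (T : 'M[R]_m) (G X0 : 'cV[R]_m) (k : nat)
  : 'cV[R]_m := iter k (fun X => T *m X + G) X0.

(* Main.v *)
Require Import Defs.
From HB Require Import structures.
From mathcomp Require Import all_boot all_order all_algebra.
From mathcomp Require Import all_classical all_reals all_analysis.
Import Order.TTheory GRing.Theory Num.Theory numFieldNormedType.Exports.
Local Open Scope classical_set_scope.
Local Open Scope ring_scope.
Set Implicit Arguments.
Lemma mk_proof d n (p : 'I_d) (k : 'I_n) : (p * n + k < d * n)%N.
Proof.
have hk := ltn_ord k; have hp := ltn_ord p.
apply: (@leq_trans (p * n + n)); first by rewrite ltn_add2l.
by rewrite -[X in (_ + X)%N]mul1n -mulnDl addn1 leq_mul2r hp orbT.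
Qed.

Definition mk d n (p : 'I_d) (k : 'I_n) : 'I_(d * n) := Ordinal (mk_proof p k).

Lemma blk_mk d n p k : blk (@mk d n p k) = p.
Proof.
apply/val_inj => /=. have hk := ltn_ord k.
by rewrite divnMDl ?(leq_ltn_trans _ hk) // divn_small // addn0.
Qed.

Lemma inn_mk d n p k : inn (@mk d n p k) = k.
Proof.
apply/val_inj => /=. have hk := ltn_ord k.
by rewrite modnMDl modn_small.
Qed.

Lemma mk_blk d n (i : 'I_(d * n)) : mk (blk i) (inn i) = i.
Proof. by apply/val_inj => /=; rewrite -divn_eq. Qed.

Lemma sum_blk (R : nmodType) d n (F : 'I_(d * n) -> R) :
  \sum_i F i = \sum_(p < d) \sum_(k < n) F (mk p k).
Proof.
rewrite pair_big /=.
rewrite (reindex (fun pk : 'I_d * 'I_n => mk pk.1 pk.2)) //=.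
exists (fun i => (blk i, inn i)) => [[p k] _|i _] /=.
  by rewrite blk_mk inn_mk.
by rewrite mk_blk.
Qed.

Lemma blk_lt d n (i j : 'I_(d * n)) : (blk j < blk i)%N -> (j < i)%N.
Proof.
move=> h; rewrite ltnNge; apply/negP => hij.
by move: h; rewrite ltnNge /= leq_div2r.
Qed.
Section S.
Variables (R : fieldType) (n d : nat) (Bs : 'I_d -> 'M[R]_n).

Definition Km : 'M[R]_(d * n) := \matrix_(i, j) Bs (blk j) (inn i) (inn j).
Definition bsum (w : 'rV[R]_(d * n)) : 'rV[R]_n := \row_k \sum_(p < d) w 0 (mk p k).

Lemma LU : splitL Bs + splitU Bs = Km.
Proof.
apply/matrixP => i j; rewrite !mxE.
by case: ltnP => h; rewrite ?add0r ?addr0.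
Qed.

Lemma mulK w j : (w *m Km) 0 j = (bsum w *m Bs (blk j)) 0 (inn j).
Proof.
rewrite !mxE sum_blk.
under eq_bigr do under eq_bigr do rewrite !mxE inn_mk.
rewrite exchange_big /=; apply: eq_bigr => k _.
by rewrite mxE mulr_suml.
Qed.

Lemma unitA : (1%:M - splitL Bs) \in unitmx.
Proof.
rewrite unitmxE det_trig.
  rewrite big1 ?unitr1 // => i _; rewrite !mxE eqxx ltnn subr0 //.
apply/is_trig_mxP => i j hij; rewrite !mxE.
rewrite -val_eqE /= (ltn_eqF hij) /= mulr0n sub0r.
case: ifP => h; last by rewrite oppr0.
by have := @blk_lt d n i j h; rewrite ltnNge (ltnW hij).
Qed.
End S.
Arguments bsum {R n d}.
Arguments Km {R n d}.
Arguments unitA {R n d}.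
Arguments LU {R n d}.
Section S3.
Variables (R : fieldType) (n d : nat) (Bs : 'I_d -> 'M[R]_n) (BJ : 'M[R]_n).
Hypothesis hsum : \sum_(p < d) Bs p = BJ.

Lemma bsum_spread (s : 'rV[R]_n) :
  bsum (\row_j (s *m Bs (blk j)) 0 (inn j)) = s *m BJ.
Proof.
apply/rowP => k; rewrite -hsum mulmx_sumr summxE [LHS]mxE.
by apply: eq_bigr => p _; rewrite mxE blk_mk inn_mk.
Qed.

Lemma part1 : eigenvalue (iterT Bs) 1 <-> eigenvalue BJ 1.
Proof.
have uA := unitA Bs.
set A := 1%:M - splitL Bs.
have hU : splitU Bs = Km Bs - splitL Bs by rewrite -LU addrC addKr.
split.
- move/eigenvalueP => [v hv v0]; apply/eigenvalueP.
  set w := v *m invmx A.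
  have hw : w *m Km Bs = w.
    have : w *m splitU Bs = w *m A by rewrite /w mulmxKV // -mulmxA hv scale1r.
    rewrite hU /A !mulmxBr mulmx1 => /eqP; rewrite subr_eq addrNK => /eqP //.
  exists (bsum w); last first.
    apply: contra v0 => /eqP s0.
    have -> : v = w *m A by rewrite /w mulmxKV.
    suff -> : w = 0 by rewrite mul0mx.
    apply/rowP => j; have := congr1 (fun m : 'rV[R]_(d * n) => m 0 j) hw; rewrite /= mulK s0 mul0mx !mxE => <- //.
  rewrite scale1r -hsum mulmx_sumr; apply/rowP => k.
  rewrite summxE mxE; apply: eq_bigr => p _.
  by have := congr1 (fun m : 'rV[R]_(d * n) => m 0 (mk p k)) hw; rewrite /= mulK blk_mk inn_mk.
- move/eigenvalueP => [s hs s0]; apply/eigenvalueP.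
  rewrite scale1r in hs.
  set w := \row_j (s *m Bs (blk j)) 0 (inn j).
  have hbw : bsum w = s by rewrite bsum_spread.
  have hw : w *m Km Bs = w.
    by apply/rowP => j; rewrite mulK hbw /w [RHS]mxE.
  exists (w *m A).
    rewrite scale1r /iterT -/A mulmxA mulmxK // hU /A !mulmxBr mulmx1 hw //.
  apply: contra s0 => /eqP h.
  have : w *m A *m invmx A = 0 by rewrite h mul0mx.
  rewrite mulmxK // => w0.
  by rewrite -hbw w0; apply/eqP/rowP => k; rewrite !mxE big1 // => p _; rewrite mxE.
Qed.
End S3.
Lemma eig_tr (F : fieldType) m (g : 'M[F]_m) a : eigenvalue g^T a = eigenvalue g a.
Proof.
rewrite /eigenvalue /eigenspace !kermx_eq0 !row_free_unit.
by rewrite -unitmx_tr linearB /= tr_scalar_mx trmxK.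
Qed.

Lemma iter_add (R : ringType) m (T : 'M[R]_m) (G X0 x : 'cV[R]_m) k :
  T *m x = x -> iterates T G (X0 + x) k = iterates T G X0 k + x.
Proof.
move=> hx; elim: k => [|k IH] //=.
rewrite /iterates /= -/(iterates T G (X0 + x) k) -/(iterates T G X0 k) IH.
by rewrite mulmxDr hx addrAC.
Qed.

Lemma noconv (R : realType) m (T : 'M[R]_m) (x : 'cV[R]_m) :
  T *m x = x -> x != 0 -> forall G : 'cV[R]_m,
     ~ exists Xs : 'cV[R]_m,
         forall X0 : 'cV[R]_m, forall i : 'I_m,
           (fun k => iterates T G X0 k i 0) @ \oo --> Xs i 0.
Proof.
move=> hx x0 G [Xs HX].
have [i xi] : exists i, x i 0 != 0.
  apply/existsP; apply: contraR x0 => /existsPn h.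
  by apply/eqP/matrixP => a b; rewrite (ord1 b) mxE; apply/eqP/negPn.
have H0 := HX 0 i.
have H1 := HX (0 + x) i.
have e : (fun k => iterates T G (0 + x) k i 0) = (fun k => iterates T G 0 k i 0 + x i 0).
  by apply: funext => k; rewrite iter_add // mxE.
rewrite e in H1.
have H2 : (fun k => iterates T G 0 k i 0 + x i 0 - x i 0) @ \oo --> Xs i 0 - x i 0.
  by apply: cvgB => //; exact: cvg_cst.
have e2 : (fun k => iterates T G 0 k i 0 + x i 0 - x i 0) = (fun k => iterates T G 0 k i 0).
  by apply: funext => k; rewrite addrK.
rewrite e2 in H2.
have E : Xs i 0 = Xs i 0 - x i 0 by apply: (cvg_unique _ H0 H2).
move: E.
move/eqP; rewrite eq_sym subr_eq addrC -subr_eq subrr eq_sym (negbTE xi) //.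
Qed.
Unset Implicit Arguments.

Theorem proposition2p4 (R : realType) (n d : nat) (Bs : 'I_d -> 'M[R]_n) (BJ : 'M[R]_n) :
  is_splitting Bs BJ ->
  (eigenvalue (iterT Bs) 1 <-> eigenvalue BJ 1) /\
  (eigenvalue BJ 1 ->
   forall G : 'cV[R]_(d * n),
     ~ exists Xs : 'cV[R]_(d * n),
         forall X0 : 'cV[R]_(d * n), forall i : 'I_(d * n),
           (fun k => iterates (iterT Bs) G X0 k i 0) @ \oo --> Xs i 0).
Proof.
case=> _ _ hsum _.
have P1 := @part1 R n d Bs BJ hsum.
split=> // /P1; rewrite -eig_tr => /eigenvalueP [v hv v0] G.
apply: (@noconv R _ (iterT Bs) v^T).
  by rewrite -[iterT Bs]trmxK -trmx_mul hv scale1r.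
by apply: contra v0 => /eqP h; rewrite -[v]trmxK h linear0.
Qed.
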